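(* Let $k$ be a natural number. For all $n\geq 2^{k-1}k(2k-1)$, $$B_k^e(n)-B_k^o(n)=C_k^e(n+1)-C_k^o(n+1)=\tfrac12 D_{2k}(n+1).$$
   Context: All partitions are of positive integers into positive parts unless stated otherwise. $B_k^e(n)$ (resp. $B_k^o(n)$) is the number of partitions of $n$ having at least one odd part, with largest odd part $2\ell-1$, in which every part is odd except for at most $k-1$ even parts. These even parts are pairwise distinct, lie in $[2\ell+2,\,2\ell+2k-2]$, and their number is even (resp. odd). $C_k^e(n)$ (resp. $C_k^o(n)$) is the number of pairs $(\lambda,\ell)$ with $\ell\ge1$ and $\lambda$ a partition of $n$ satisfying three conditions: - $\lambda$ contains the part $2\ell$; - the parts of $\lambda$ not exceeding $\ell$ are pairwise distinct, while parts in $(\ell,2\ell]$ are unrestricted; - the parts larger than $2\ell$ are at most $k-1$ pairwise distinct even parts in $[2\ell+2,\,2\ell+2k-2]$, and their number is even (resp. odd). Equivalently, a partition admitting several choices of $\ell$ is counted once per choice, matching the generating function $\sum_{\ell\ge1}\frac{(-q;q)_\ell(\mp q^{2\ell+2};q^2)_{k-1}}{(q^{\ell+1};q)_\ell}q^{2\ell}$ for $C^e\pm C^o$. $D_j(n)$ is the number of partitions of $n$ into non-negative parts (the part $0$ is allowed) in which the smallest part appears exactly $j$ times and no other part is repeated. The convention is $D_j(0)=1$, and the generating function is $\sum_{n\ge0}D_j(n)q^n=\sum_{m\ge0}q^{mj}(-q^{m+1};q)_\infty$, where $(a;q)_N=\prod_{i=0}^{N-1}(1-aq^i)$. *)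

(* Defs.v *)
From mathcomp Require Import all_boot all_order all_algebra.
Set Implicit Arguments. Unset Strict Implicit. Unset Printing Implicit Defensive.

(* A partition of n into positive parts is encoded by m : 'I_n.+1 -> 'I_n.+1,
   where m i is the multiplicity of the part i (every part is <= n and every
   multiplicity is <= n); the part 0 has multiplicity 0 and the weighted sum
   is n.  This is a bijection with the partitions of n. *)
Definition ptn (n : nat) := {ffun 'I_n.+1 -> 'I_n.+1}.

Definition is_ptn (n : nat) (m : ptn n) : bool :=
  (m ord0 == 0 :> nat) && (\sum_(i < n.+1) i * m i == n).

Definition mu (n : nat) (m : ptn n) (i : nat) : nat :=
  if i <= n then nat_of_ord (m (inord i)) else 0.

(* B_k^e (b = false) and B_k^o (b = true).  L = 2l-1 is the largest odd part;
   the even parts are distinct and lie in [2l+2, 2l+2k-2] = [L+3, L+2k-1];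
   b records the parity of the number of even parts. *)
Definition Bpred (k : nat) (b : bool) (n : nat) (m : ptn n) : bool :=
  is_ptn m &&
  [exists L : 'I_n.+1,
    [&& odd L, 0 < m L,
        [forall i : 'I_n.+1, (odd i && (0 < m i)) ==> (i <= L)],
        [forall i : 'I_n.+1, (~~ odd i && (0 < m i)) ==>
            [&& m i == 1 :> nat, L + 3 <= i & i <= L + 2 * k - 1]] &
        odd (\sum_(i < n.+1 | ~~ odd i) m i) == b]].

Definition B (k : nat) (b : bool) (n : nat) : nat :=
  #|[set m : ptn n | Bpred k b m]|.

(* C_k^e (b = false) and C_k^o (b = true): pairs (lambda, l), l >= 1. *)
Definition Cpred (k : nat) (b : bool) (n l : nat) (m : ptn n) : bool :=
  [&& is_ptn m, 0 < mu m (2 * l),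
      [forall i : 'I_n.+1, ((0 < i) && (i <= l)) ==> (m i <= 1)],
      [forall i : 'I_n.+1, ((2 * l < i) && (0 < m i)) ==>
          [&& ~~ odd i, m i == 1 :> nat, 2 * l + 2 <= i & i <= 2 * l + 2 * k - 2]] &
      odd (\sum_(i < n.+1 | 2 * l < i) m i) == b].

(* any l with 2l > n contributes nothing, so l ranges over 1..n *)
Definition C (k : nat) (b : bool) (n : nat) : nat :=
  \sum_(1 <= l < n.+1) #|[set m : ptn n | Cpred k b l m]|.

(* D_j(n): partitions of n into non-negative parts (0 allowed), encoded by
   multiplicities m : 'I_n.+1 -> 'I_(n+j).+1, such that the smallest part s
   appears exactly j times and no other part is repeated. (Meaningful for
   j >= 1; then D_j(0) = 1, the partition with j zeros.) *)
Definition dptn (n j : nat) := {ffun 'I_n.+1 -> 'I_(n + j).+1}.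

Definition Dpred (j n : nat) (m : dptn n j) : bool :=
  (\sum_(i < n.+1) i * m i == n) &&
  [exists s : 'I_n.+1,
    (m s == j :> nat) &&
    [forall i : 'I_n.+1, ((i < s) ==> (m i == 0 :> nat)) &&
                         ((s < i) ==> (m i <= 1))]].

Definition D (j n : nat) : nat := #|[set m : dptn n j | Dpred m]|.

(* Main.v *)
Require Import Defs.
From mathcomp Require Import all_boot all_order all_algebra.
From mathcomp Require Import ring zify.
Import GRing.Theory.
Local Open Scope ring_scope.

Notation PI := {poly int}.

Definition cg (N : nat) (p q : PI) := exists r : PI, p = q + r * 'X^(N.+1).

Lemma cg_refl N p : cg N p p.
Proof. by exists 0; rewrite mul0r addr0. Qed.

Lemma cg_sym N p q : cg N p q -> cg N q p.
Proof. by case=> r ->; exists (- r); ring. Qed.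

Lemma cg_trans N p q s : cg N p q -> cg N q s -> cg N p s.
Proof. by case=> r -> [t ->]; exists (r + t); ring. Qed.

Lemma cg_add N p q p' q' : cg N p q -> cg N p' q' -> cg N (p + p') (q + q').
Proof. by case=> r -> [t ->]; exists (r + t); ring. Qed.

Lemma cg_opp N p q : cg N p q -> cg N (- p) (- q).
Proof. by case=> r ->; exists (- r); ring. Qed.

Lemma cg_sub N p q p' q' : cg N p q -> cg N p' q' -> cg N (p - p') (q - q').
Proof. by move=> h1 h2; apply: cg_add => //; apply: cg_opp. Qed.

Lemma cg_mul N p q p' q' : cg N p q -> cg N p' q' -> cg N (p * p') (q * q').
Proof.
by case=> r -> [t ->]; exists (r * q' + q * t + r * t * 'X^(N.+1)); ring.
Qed.

Lemma cg_mull N c p q : cg N p q -> cg N (c * p) (c * q).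
Proof. by apply: cg_mul; apply: cg_refl. Qed.

Lemma cg_mulr N c p q : cg N p q -> cg N (p * c) (q * c).
Proof. by move=> h; apply: cg_mul => //; apply: cg_refl. Qed.

Lemma cg_Xn0 N a : (N < a)%N -> cg N 'X^a 0.
Proof.
move=> h; exists 'X^(a - N.+1); rewrite add0r -exprD subnK //.
Qed.

Lemma cg_coef N p q : cg N p q -> p`_N = q`_N.
Proof. by case=> r ->; rewrite coefD coefMXn ltnSn addr0. Qed.

Lemma cg_prod N (I : Type) (r : seq I) (P : pred I) (F1 F2 : I -> PI) :
  (forall i, P i -> cg N (F1 i) (F2 i)) ->
  cg N (\prod_(i <- r | P i) F1 i) (\prod_(i <- r | P i) F2 i).
Proof.
move=> h; apply: (big_ind2 (cg N)); first exact: cg_refl.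
  by move=> ????; apply: cg_mul.
exact: h.
Qed.

Lemma cg_sum N (I : Type) (r : seq I) (P : pred I) (F1 F2 : I -> PI) :
  (forall i, P i -> cg N (F1 i) (F2 i)) ->
  cg N (\sum_(i <- r | P i) F1 i) (\sum_(i <- r | P i) F2 i).
Proof.
move=> h; apply: (big_ind2 (cg N)); first exact: cg_refl.
  by move=> ????; apply: cg_add.
exact: h.
Qed.

Definition G (N i : nat) : PI := \sum_(j < N.+1) 'X^(i * j).

Lemma G_mul N i : (1 - 'X^i) * G N i = 1 - 'X^(i * N.+1).
Proof.
elim: N => [|N IH]; first by rewrite /G big_ord1 muln0 expr0 mulr1 muln1.
rewrite /G big_ord_recr /= mulrDr -/(G N i) IH.
rewrite [X in 1 - X + _](_ : _ = 'X^(i * N.+1) * 1) ?mulr1 //.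
have -> : (i * N.+2 = i * N.+1 + i)%N by rewrite mulnS addnC.
rewrite exprD; ring.
Qed.

Lemma G_inv N i : (0 < i)%N -> cg N ((1 - 'X^i) * G N i) 1.
Proof.
move=> hi; rewrite G_mul; apply: cg_sym.
exists 'X^(i * N.+1 - N.+1).
rewrite -exprD subnK; last by rewrite leq_pmull.
ring.
Qed.

Lemma cg_1X N i : (N < i)%N -> cg N (1 - 'X^i) 1.
Proof.
move=> h; apply: cg_trans (_ : cg N (1 - 0) 1); last by rewrite subr0; apply: cg_refl.
by apply: cg_sub; [apply: cg_refl | apply: cg_Xn0].
Qed.

Lemma cg_1Xp N i : (N < i)%N -> cg N (1 + 'X^i) 1.
Proof.
move=> h; apply: cg_trans (_ : cg N (1 + 0) 1); last by rewrite addr0; apply: cg_refl.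
by apply: cg_add; [apply: cg_refl | apply: cg_Xn0].
Qed.

Lemma cg_G1 N i : (N < i)%N -> cg N (G N i) 1.
Proof.
move=> h; apply: (@cg_trans N _ ((1 - 'X^i) * G N i)); last first.
  by apply: G_inv; exact: (leq_ltn_trans (leq0n N) h).
rewrite -[X in cg _ X _]mul1r; apply: cg_mulr; apply: cg_sym; exact: cg_1X.
Qed.

Lemma cg_cancel N u v p q : cg N (u * v) 1 -> cg N (p * u) (q * u) -> cg N p q.
Proof.
move=> huv h.
have e1 : cg N p (p * u * v).
  rewrite -mulrA -[X in cg _ X _]mulr1; apply: cg_mull; apply: cg_sym; exact huv.
have e2 : cg N (q * u * v) q.
  rewrite -mulrA -[X in cg _ _ X]mulr1; apply: cg_mull; exact huv.
apply: cg_trans e1 _; apply: cg_trans _ e2; exact: cg_mulr.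
Qed.

Lemma prod_pair (F : nat -> PI) K :
  \prod_(i < 2 * K) F i = \prod_(j < K) (F (2 * j)%N * F (2 * j).+1).
Proof.
elim: K => [|K IH]; first by rewrite muln0 !big_ord0.
rewrite mulnS !add2n big_ord_recr big_ord_recr /= big_ord_recr /= IH mulrA.
by rewrite mulnC.
Qed.

Lemma sum_pair (F : nat -> int) K :
  \sum_(i < 2 * K) F i = \sum_(j < K) (F (2 * j)%N + F (2 * j).+1).
Proof.
elim: K => [|K IH]; first by rewrite muln0 !big_ord0.
rewrite mulnS !add2n big_ord_recr big_ord_recr /= big_ord_recr /= IH addrA.
by rewrite mulnC.
Qed.

Definition Q2 (m : nat) : PI := \prod_(1 <= i < m.+1) (1 - 'X^(2 * i)).
Definition GP (N b : nat) : PI := \prod_(1 <= i < b.+1) G N i.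
Definition A (N s : nat) : PI := \prod_(s.+1 <= i < N.+1) (1 + 'X^i).
Definition Pp (N : nat) : PI := A N 0.
Definition a (N k l : nat) : PI := 'X^(2 * l) * Q2 (l + k - 1) * GP N (2 * l).
Definition T (N k l : nat) : PI := 'X * Q2 (l + k - 1) * GP N (2 * l - 2).
Definition Csum (N k : nat) : PI := \sum_(1 <= l < N.+1) a N k l.
Definition Dsum (N j : nat) : PI := \sum_(s < N.+1) 'X^(j * s) * A N s.

Lemma Q2S m : Q2 m.+1 = Q2 m * (1 - 'X^(2 * m.+1)).
Proof. by rewrite /Q2 big_nat_recr. Qed.

Lemma GPS N b : GP N b.+1 = GP N b * G N b.+1.
Proof. by rewrite /GP big_nat_recr. Qed.

Lemma prod_tail_cg N m b (F : nat -> PI) :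
  (forall i, (N < i)%N -> cg N (F i) 1) -> (N < m)%N ->
  cg N (\prod_(m <= i < b) F i) 1.
Proof.
move=> hF hm; rewrite big_nat_cond.
apply: (@cg_trans N _ (\prod_(m <= i < b | (m <= i < b)%N && true) 1)).
  apply: cg_prod => i /andP [/andP [h1 _] _]; apply: hF.
  exact: leq_trans hm h1.
by rewrite big1 //; apply: cg_refl.
Qed.

Lemma Plim N m b : (N <= m)%N -> (N <= b)%N -> cg N (Q2 m * GP N b) (Pp N).
Proof.
move=> hm hb.
have eQ : Q2 m = \prod_(1 <= i < m.+1) ((1 - 'X^i) * (1 + 'X^i)).
  rewrite /Q2; apply: eq_bigr => i _; rewrite mulnC exprM; ring.
rewrite eQ /GP (@big_cat_nat _ _ _ N.+1) /=; try by lia.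
rewrite [X in _ * X](@big_cat_nat _ _ _ N.+1) /=; try by lia.
have t1 : cg N (\prod_(N.+1 <= i < m.+1) ((1 - 'X^i) * (1 + 'X^i))) 1.
  apply: prod_tail_cg => // i hi.
  rewrite -[X in cg _ _ X]mulr1; apply: cg_mul; [exact: cg_1X | exact: cg_1Xp].
have t2 : cg N (\prod_(N.+1 <= i < b.+1) G N i) 1.
  by apply: prod_tail_cg => // i hi; apply: cg_G1.
apply: (@cg_trans N _ ((\prod_(1 <= i < N.+1) ((1 - 'X^i) * (1 + 'X^i)) * 1)
   * (\prod_(1 <= i < N.+1) G N i * 1))).
  by apply: cg_mul; apply: cg_mull.
rewrite !mulr1 big_split /= mulrAC -big_split /= /Pp /A.
rewrite -[X in cg _ _ X]mul1r; apply: cg_mulr.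
apply: (@cg_trans N _ (\prod_(1 <= i < N.+1) (1 : PI))); last by rewrite big1 //; apply: cg_refl.
rewrite big_nat_cond [X in cg _ _ X]big_nat_cond.
apply: cg_prod => i /andP [/andP [hi _] _]; apply: G_inv; exact: hi.
Qed.

Lemma tel N k l : (0 < l)%N ->
  cg N (T N k l.+1 - T N k l) (a N k l * (1 + 'X - 'X^(2 * l) - 'X^(2 * k + 1))).
Proof.
case: l => // l _.
rewrite /T /a.
have -> : (l.+2 + k - 1 = (l + k).+1)%N by lia.
have -> : (2 * l.+2 - 2 = (2 * l).+2)%N by lia.
have -> : (l.+1 + k - 1 = l + k)%N by lia.
have -> : (2 * l.+1 - 2 = 2 * l)%N by lia.
have -> : (2 * l.+1 = (2 * l).+2)%N by lia.
rewrite Q2S !GPS.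
set R := Q2 _; set g0 := GP _ _; set g1 := G N _; set g2 := G N _.
have h1 : cg N ((1 - 'X^((2 * l).+1)) * g1) 1 by apply: G_inv.
have h2 : cg N ((1 - 'X^((2 * l).+2)) * g2) 1 by apply: G_inv.
have e1 : 'X^(2 * (l + k).+1) = 'X^((2 * l).+1) * 'X^(2 * k + 1) :> PI.
  by rewrite -exprD; congr ('X^_); lia.
have e2 : 'X^((2 * l).+2) = 'X^((2 * l).+1) * 'X :> PI by rewrite exprSr.
rewrite e1 e2 in h2 *.
set y := 'X^((2 * l).+1); set z := 'X^(2 * k + 1).
apply: (@cg_trans N _ ('X * (R * (1 - y * z)) * (g0 * g1 * g2)
   - 'X * R * g0 * (((1 - y) * g1) * ((1 - y * 'X) * g2)))).
  apply: cg_sub; first exact: cg_refl.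
  rewrite -[X in cg _ X _]mulr1; apply: cg_mull; apply: cg_sym.
  apply: (@cg_trans N _ (1 * 1)); first exact: cg_mul.
  rewrite mulr1; exact: cg_refl.
have -> : 'X * (R * (1 - y * z)) * (g0 * g1 * g2) -
    'X * R * g0 * ((1 - y) * g1 * ((1 - y * 'X) * g2)) =
    y * 'X * R * (g0 * g1 * g2) * (1 + 'X - y * 'X - z) by ring.
exact: cg_refl.
Qed.

Lemma a_succ N k l : (0 < l)%N -> a N k.+1 l = a N k l * (1 - 'X^(2 * (l + k))).
Proof.
case: l => // l _; rewrite /a.
have -> : (l.+1 + k.+1 - 1 = (l.+1 + k - 1).+1)%N by lia.
rewrite Q2S; have -> : ((l.+1 + k - 1).+1 = l.+1 + k)%N by lia.
ring.
Qed.

Lemma T1 N k : T N k 1 = 'X * Q2 k.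
Proof. by rewrite /T /GP big_geq // mulr1 add1n subn1. Qed.

Lemma Crec N k :
  cg N (Csum N k.+1)
   ((1 - 'X^(2 * k)) * (1 - 'X^(2 * k) * 'X) * Csum N k
      + 'X^(2 * k) * 'X * (Pp N - Q2 k)).
Proof.
set x := 'X^(2 * k).
have step : forall l, (0 < l)%N ->
   cg N (a N k.+1 l - (1 - x) * (1 - x * 'X) * a N k l)
        (x * (T N k l.+1 - T N k l)).
  move=> l hl; rewrite a_succ //.
  apply: (@cg_trans N _ (x * (a N k l * (1 + 'X - 'X^(2 * l) - 'X^(2 * k + 1))))); last first.
    by apply: cg_mull; apply: cg_sym; apply: tel.
  have -> : 'X^(2 * (l + k)) = 'X^(2 * l) * x :> PI by rewrite /x -exprD mulnDr.
  have -> : 'X^(2 * k + 1) = x * 'X :> PI by rewrite /x exprD expr1.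
  have -> : forall u v w : PI, u * (1 - v * x) - (1 - x) * (1 - x * 'X) * u
      = x * (u * (1 + 'X - v - x * 'X)) by move=> u v w; ring.
  exact: cg_refl.
  exact: 0.
have hsum : cg N (Csum N k.+1 - (1 - x) * (1 - x * 'X) * Csum N k)
                 (x * (T N k N.+1 - T N k 1)).
  rewrite /Csum mulr_sumr -sumrB.
  rewrite -telescope_sumr // mulr_sumr.
  rewrite big_nat_cond [X in cg _ _ X]big_nat_cond.
  apply: cg_sum => l /andP [/andP [hl _] _]; exact: step.
have hT : cg N (T N k N.+1) ('X * Pp N).
  rewrite /T -mulrA; apply: cg_mull; apply: Plim; lia.
have : cg N (Csum N k.+1) ((1 - x) * (1 - x * 'X) * Csum N k + x * (T N k N.+1 - T N k 1)).
  case: hsum => r hr; exists r; rewrite -addrA -hr; ring.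
move=> h; apply: cg_trans h _.
apply: cg_add; first exact: cg_refl.
rewrite T1 -mulrA; apply: cg_mull.
rewrite mulrBr; apply: cg_sub; [exact: hT | exact: cg_refl].
Qed.

Lemma AS N s : (s < N)%N -> A N s = (1 + 'X^(s.+1)) * A N s.+1.
Proof. by move=> h; rewrite /A big_ltn. Qed.

Lemma AN N : A N N = 1.
Proof. by rewrite /A big_geq. Qed.

Lemma Dsum_l N j : Dsum N j = Pp N + \sum_(s < N) 'X^(j * s.+1) * A N s.+1.
Proof. by rewrite /Dsum big_ord_recl muln0 expr0 mul1r. Qed.

Definition Sd N j : PI := \sum_(s < N) 'X^(j * s.+1) * A N s.+1.

Lemma XD N j : 'X^j * Dsum N j = Sd N j + Sd N j.+1 + 'X^(j * N.+1).
Proof.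
rewrite /Dsum big_ord_recr /= AN mulr1 mulrDr mulr_sumr /Sd.
rewrite -big_split /=; congr (_ + _); last by rewrite -exprD mulnS addnC.
apply: eq_bigr => s _.
rewrite AS // mulrA -exprD.
have -> : (j + j * s = j * s.+1)%N by rewrite mulnS.
have -> : (j.+1 * s.+1 = j * s.+1 + s.+1)%N by rewrite mulSn addnC.
rewrite exprD; ring.
Qed.

Lemma Drel N j :
  'X^j * Dsum N j = (Dsum N j - Pp N) + (Dsum N j.+1 - Pp N) + 'X^(j * N.+1).
Proof. rewrite XD (Dsum_l N j) (Dsum_l N j.+1) -/(Sd N j) -/(Sd N j.+1); ring. Qed.

Lemma cg_eq N p q : p = q -> cg N p q.
Proof. by move=> ->; apply: cg_refl. Qed.

Fixpoint Ef (k : nat) : PI :=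
  match k with
  | 0 => 1 + 'X
  | k'.+1 => (1 - 'X^(2 * k)) * (1 - 'X^(2 * k) * 'X) * Ef k'
             + 2%:R * ('X^(2 * k) * 'X) * Q2 k
  end.

Lemma D1 N : Dsum N 1 = 2%:R * Pp N - 1.
Proof.
have := Drel N 0; rewrite ?mul0n !expr0 mul1r => h.
transitivity ((Dsum N 0 - Pp N + (Dsum N 1 - Pp N) + 1) - Dsum N 0 + 2%:R * Pp N - 1).
  ring.
rewrite -h; ring.
Qed.

Lemma Dstep N j : (0 < j)%N ->
  cg N ((1 - 'X^j) * Dsum N j) (2%:R * Pp N - Dsum N j.+1).
Proof.
move=> hj; have h := Drel N j.
have h0 : cg N ('X^(j * N.+1)) 0 by apply: cg_Xn0; rewrite mulnC; exact: leq_pmulr.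
case: h0 => r hr; exists (- r).
rewrite mulrBl mul1r h hr; ring.
Qed.

Lemma D2step N j : (0 < j)%N ->
  cg N (Dsum N j.+2)
     ((1 - 'X^j) * (1 - 'X^j * 'X) * Dsum N j + 2%:R * ('X^j * 'X) * Pp N).
Proof.
move=> hj.
have h1 := @Dstep N j.+1 (ltn0Sn j).
have h2 := @Dstep N j hj.
have e : 'X^(j.+1) = 'X^j * 'X :> PI by rewrite exprSr.
rewrite e in h1.
case: h1 => r1 hr1; case: h2 => r2 hr2.
exists (r1 - (1 - 'X^j * 'X) * r2).
have -> : Dsum N j.+2 = 2%:R * Pp N + r1 * 'X^(N.+1) - (1 - 'X^j * 'X) * Dsum N j.+1.
  rewrite hr1; ring.
have -> : Dsum N j.+1 = 2%:R * Pp N + r2 * 'X^(N.+1) - (1 - 'X^j) * Dsum N j.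
  rewrite hr2; ring.
ring.
Qed.

Lemma main_cg N k : cg N (Dsum N (2 * k).+2) (2%:R * Csum N k.+1 + Ef k).
Proof.
elim: k => [|k IH].
  have hd := @Dstep N 1 (ltn0Sn 0).
  rewrite D1 expr1 in hd.
  have hc := Crec N 0.
  rewrite muln0 expr0 /Q2 big_geq // in hc.
  case: hd => r hr; case: hc => r2 hr2; exists (r - 2%:R * r2).
  have -> : Dsum N 2 = 2%:R * Pp N + r * 'X^(N.+1) - (1 - 'X) * (2%:R * Pp N - 1).
    rewrite hr; ring.
  rewrite hr2 /=; ring.
have hd := @D2step N (2 * k).+2 (ltn0Sn _).
have hc := Crec N k.+1.
have e : (2 * k).+2 = (2 * k.+1)%N by lia.
rewrite e in hd IH.
have e4 : (2 * k.+1).+2 = (2 * k.+1).+2 by [].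
case: hd => r0 hr0; case: IH => r1 hr1; case: hc => r2 hr2.
exists (r0 + (1 - 'X^(2 * k.+1)) * (1 - 'X^(2 * k.+1) * 'X) * r1 - 2%:R * r2).
rewrite hr0 hr1 hr2 /=; ring.
Qed.

Definition dle (d : nat) (p : PI) := (size p <= d.+1)%N.

Lemma dle_mul d e p q : dle d p -> dle e q -> dle (d + e) (p * q).
Proof.
rewrite /dle => h1 h2; apply: leq_trans (size_mul_leq _ _) _.
have := leq_add h1 h2; lia.
Qed.

Lemma dle_add d p q : dle d p -> dle d q -> dle d (p + q).
Proof.
rewrite /dle => h1 h2; apply: leq_trans (size_add _ _) _.
by rewrite geq_max h1 h2.
Qed.

Lemma dle_opp d p : dle d p -> dle d (- p).
Proof. by rewrite /dle size_opp. Qed.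

Lemma dle_mono d e p : (d <= e)%N -> dle d p -> dle e p.
Proof. by rewrite /dle => h1 h2; apply: leq_trans h2 _. Qed.
Arguments dle_mono {d e p}.
Arguments dle_mul {d e p q}.
Arguments dle_add {d p q}.
Arguments dle_opp {d p}.

Lemma dle_X a : dle a ('X^a : PI).
Proof. by rewrite /dle size_polyXn. Qed.

Lemma dle_C (c : int) : dle 0 (c%:P).
Proof. by rewrite /dle size_polyC; case: (c != 0). Qed.

Lemma dle_1X a : dle a (1 - 'X^a : PI).
Proof.
apply: dle_add; last by apply: dle_opp; apply: dle_X.
apply: (@dle_mono 0) => //; rewrite -polyC1; exact: dle_C.
Qed.

Lemma dle_Q2 m : dle (m * m.+1) (Q2 m).
Proof.
elim: m => [|m IH]; first by rewrite /Q2 big_geq // /dle size_poly1.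
rewrite Q2S; apply: (dle_mono _ (dle_mul IH (dle_1X _))); lia.
Qed.

Lemma dle_Ef k : dle (k.+1 * (2 * k).+1) (Ef k).
Proof.
elim: k => [|k IH] /=.
  apply: dle_add; first by apply: (@dle_mono 0) => //; rewrite -polyC1; exact: dle_C.
  by rewrite /dle size_polyX.
apply: dle_add.
  have h1 := dle_1X (2 * k.+1).
  have h2 : dle (2 * k.+1 + 1) (1 - 'X^(2 * k.+1) * 'X).
    rewrite -exprSr addn1; exact: dle_1X.
  apply: (dle_mono _ (dle_mul (dle_mul h1 h2) IH)); lia.
have h3 : dle (0 + (2 * k.+1 + 1)) (2%:R * ('X^(2 * k.+1) * 'X) : PI).
  apply: dle_mul; first by rewrite -polyC_natr; exact: dle_C.
  rewrite -exprSr addn1; exact: dle_X.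
apply: (dle_mono _ (dle_mul h3 (dle_Q2 _))); lia.
Qed.

Lemma Ef_coef k N : (k.+1 * (2 * k).+1 < N)%N -> (Ef k)`_N = 0.
Proof.
move=> h; apply: nth_default; apply: leq_trans (dle_Ef k) _; exact: h.
Qed.

Lemma prod_if_range M a b (f : nat -> PI) : (b <= M)%N ->
  \prod_(i < M) (if (a <= i < b)%N then f i else 1) = \prod_(a <= i < b) f i.
Proof.
move=> hbM; rewrite -(big_mkord xpredT (fun i => if (a <= i < b)%N then f i else 1)).
case: (leqP a b) => hab; last first.
  rewrite [RHS]big_geq; last exact: ltnW.
  rewrite big1_seq // => i _; case: ifP => //; lia.
rewrite (@big_cat_nat _ _ _ a) //=; last exact: leq_trans hab hbM.
rewrite (@big_cat_nat _ _ _ b a M) //=.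
rewrite [X in X * _]big1_seq; last first.
  by move=> i /andP [_]; rewrite mem_index_iota => h; case: ifP => //; lia.
rewrite [X in _ * (_ * X)]big1_seq; last first.
  by move=> i /andP [_]; rewrite mem_index_iota => h; case: ifP => //; lia.
rewrite mul1r mulr1; apply: eq_big_nat => i hi; rewrite hi.
by [].
Qed.

Lemma prod_ext N M M' (F : nat -> PI) : (M <= M')%N ->
  (forall i, (M <= i < M')%N -> cg N (F i) 1) ->
  cg N (\prod_(i < M) F i) (\prod_(i < M') F i).
Proof.
move=> hM hF; rewrite -(big_mkord xpredT F) -(big_mkord xpredT F).
rewrite [X in cg _ _ X](@big_cat_nat _ _ _ M) //=.
rewrite -[X in cg _ X _]mulr1; apply: cg_mull; apply: cg_sym.
apply: (@cg_trans N _ (\prod_(M <= i < M') 1)); last first.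
  by rewrite big1 //; apply: cg_refl.
rewrite big_nat_cond [X in cg _ _ X]big_nat_cond.
by apply: cg_prod => i /andP [hi _]; apply: hF.
Qed.

Lemma EV N M l k : (N < M)%N ->
  cg N (\prod_(i < M) (if ~~ odd i && (2 * l.+1 <= i)%N && (i <= 2 * (l + k) - 2)%N
                       then 1 - 'X^i else 1))
       (\prod_(l.+1 <= j < l + k) (1 - 'X^(2 * j))).
Proof.
move=> hM.
pose F := fun i : nat => (if ~~ odd i && (2 * l.+1 <= i)%N && (i <= 2 * (l + k) - 2)%N
                       then 1 - 'X^i else 1) : PI.
change (cg N (\prod_(i < M) F i) (\prod_(l.+1 <= j < l + k) (1 - 'X^(2 * j)))).
have h1 : cg N (\prod_(i < M) F i) (\prod_(i < 2 * (M + l + k)) F i).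
  apply: prod_ext; first lia.
  move=> i /andP [hi1 hi2]; rewrite /F; case: ifP => _; last exact: cg_refl.
  apply: cg_1X; lia.
apply: cg_trans h1 _; rewrite prod_pair.
have -> : \prod_(j < M + l + k) (F (2 * j)%N * F (2 * j).+1)
   = \prod_(j < M + l + k) (if (l.+1 <= j < l + k)%N then 1 - 'X^(2 * j) else 1).
  apply: eq_bigr => j _; rewrite /F.
  have o1 : odd (2 * j) = false by rewrite mul2n odd_double.
  have o2 : odd (2 * j).+1 = true by rewrite /= mul2n odd_double.
  rewrite o1 o2 /= mulr1.
  have -> : ((2 * l.+1 <= 2 * j) && (2 * j <= 2 * (l + k) - 2))%N = (l.+1 <= j < l + k)%N.
    apply/idP/idP; [move=> /andP [? ?]; apply/andP; split; lia
                   |move=> /andP [? ?]; apply/andP; split; lia].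
  by [].
rewrite (prod_if_range _ _ _ (fun j => 1 - 'X^(2 * j))); [exact: cg_refl | lia].
Qed.

Lemma OD M l (f : nat -> PI) : ((2 * l).+1 < M)%N ->
  \prod_(i < M) (if odd i && (i <= (2 * l).+1)%N then f i else 1)
  = \prod_(j < l.+1) f (2 * j).+1.
Proof.
move=> hM.
pose F := fun i : nat => (if odd i && (i <= (2 * l).+1)%N then f i else 1) : PI.
change (\prod_(i < M) F i = \prod_(j < l.+1) f (2 * j).+1).
have h1 : \prod_(i < M) F i = \prod_(i < 2 * (M + l)) F i.
  rewrite -!(big_mkord xpredT F) (@big_cat_nat _ _ _ M 0 (2 * (M + l))) //=; last lia.
  rewrite [X in _ * X]big1_seq ?mulr1 // => i /andP [_]; rewrite mem_index_iota => /andP [h h'].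
  rewrite /F; case: ifP => //; move=> /andP [_ ?]; lia.
rewrite h1 prod_pair.
rewrite -(big_mkord xpredT (fun j => f (2 * j).+1)).
rewrite -(prod_if_range (M + l) 0 l.+1 (fun j => f (2 * j).+1)); last lia.
apply: eq_bigr => j _; rewrite /F.
have o1 : odd (2 * j) = false by rewrite mul2n odd_double.
have o2 : odd (2 * j).+1 = true by rewrite /= mul2n odd_double.
rewrite o1 o2 /= mul1r; congr (if _ then _ else _); apply/idP/idP; lia.
Qed.

Lemma prod_scaleX (I : Type) (r : seq I) (c : I -> int) (e : I -> nat) :
  \prod_(i <- r) (c i *: 'X^(e i) : PI) = (\prod_(i <- r) c i) *: 'X^(\sum_(i <- r) e i).
Proof.
elim: r => [|x r IH]; first by rewrite !big_nil scale1r expr0.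
rewrite !big_cons IH exprD -scalerAl -scalerAr scalerA.
by rewrite -!mul_polyC mulrA.
Qed.

Lemma count_gen (n M t : nat) (w : nat -> nat -> int) :
  \sum_(m : {ffun 'I_n -> 'I_M})
     (((\sum_(i < n) i * m i)%N == t)%:R * \prod_(i < n) w i (m i))
  = (\prod_(i < n) \sum_(j < M) (w i j *: 'X^(i * j) : PI))`_t.
Proof.
rewrite bigA_distr_bigA /= coef_sum; apply: eq_bigr => m _.
rewrite prod_scaleX coefZ coefXn mulrC; congr (_ * _).
by rewrite eq_sym.
Qed.

Lemma card_sumZ (T : finType) (P : pred T) :
  (#|[set x | P x]| : int) = \sum_x (P x)%:R.
Proof.
rewrite cardsE -sum1_card -natz natr_sum big_mkcond /=.
by apply: eq_bigr => x _; rewrite unfold_in; case: (P x).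
Qed.

Lemma prod_bool (I : finType) (b : I -> bool) :
  \prod_i ((b i)%:R : int) = ([forall i, b i])%:R.
Proof.
case: (boolP [forall i, b i]) => [/forallP h | /forallPn [i hi]].
  by rewrite big1 // => i _; rewrite h.
by rewrite (bigD1 i) //= (negbTE hi) mul0r.
Qed.

Lemma exists_unique_sum (T : finType) (P : pred T) :
  (forall x y, P x -> P y -> x = y) ->
  (([exists x, P x])%:R : int) = \sum_x (P x)%:R.
Proof.
move=> hu; case: (pickP P) => [x Px | none].
  have -> : [exists x, P x] by apply/existsP; exists x.
  rewrite (bigD1 x) //= Px big1 ?addr0 // => y hy.
  case: (boolP (P y)) => // Py; by rewrite (hu _ _ Px Py) eqxx in hy.
have -> : [exists x, P x] = false by apply/existsP => [[x Px]]; rewrite none in Px.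
by rewrite big1 // => x _; rewrite none.
Qed.

Set Implicit Arguments. Unset Strict Implicit. Unset Printing Implicit Defensive.

Definition Bcore (k n : nat) (m : ptn n) (L : 'I_n.+1) : bool :=
  ([&& odd L, 0 < m L,
        [forall i : 'I_n.+1, (odd i && (0 < m i)) ==> (i <= L)] &
        [forall i : 'I_n.+1, (~~ odd i && (0 < m i)) ==>
            [&& m i == 1 :> nat, L + 3 <= i & i <= L + 2 * k - 1]]])%N.

Definition SB n (m : ptn n) : nat := (\sum_(i < n.+1 | ~~ odd i) m i)%N.

Definition cB (k L i j : nat) : bool :=
  (if i == 0 then j == 0 else if odd i then
     (if i < L then true else if i == L then 0 < j else j == 0)
   else (if (L + 3 <= i) && (i <= L + 2 * k - 1) then j <= 1 else j == 0))%N.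

Lemma Bpred_split k b n (m : ptn n) :
  Bpred k b m = is_ptn m && [exists L, Bcore k m L] && (odd (SB m) == b).
Proof.
rewrite /Bpred -andbA; congr (_ && _).
apply/idP/idP.
  move/existsP => [L /and5P [o p f1 f2 e]].
  by apply/andP; split => //; apply/existsP; exists L; apply/and4P; split.
move/andP => [/existsP [L /and4P [o p f1 f2]] e].
by apply/existsP; exists L; apply/and5P; split.
Qed.

Lemma Bcore_uniq k n (m : ptn n) L L' : Bcore k m L -> Bcore k m L' -> L = L'.
Proof.
move=> /and4P [o p f1 _] /and4P [o' p' f1' _].
apply: val_inj; apply/eqP; rewrite eqn_leq.
move/forallP/(_ L)/implyP: f1' => -> /=; last by rewrite o p.
by move/forallP/(_ L')/implyP: f1 => ->; rewrite ?o' ?p'.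
Qed.

Lemma Bcore_forall k n (m : ptn n) (L : 'I_n.+1) : odd L ->
  ((m ord0 == 0 :> nat) && Bcore k m L) = [forall i : 'I_n.+1, cB k L i (m i)].
Proof.
move=> oL; apply/idP/idP.
  move=> /andP [/eqP m0 /and4P [_ pL f1 f2]]; apply/forallP => i; rewrite /cB.
  case: ifP => [/eqP i0|i0].
    have -> : i = ord0 by apply: val_inj.
    by rewrite m0.
  case: ifP => oi.
    case: ltnP => // hiL.
    case: ifP => [/eqP iL|iL].
      by have -> : i = L by apply: val_inj.
    case: (posnP (m i)) => [mi0|pi]; first by apply/eqP.
    move/forallP/(_ i)/implyP: f1; rewrite oi pi => /(_ isT) h.
    have : val i = val L by apply/eqP; rewrite eqn_leq h hiL.
    by move/eqP; rewrite iL.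
  case: (posnP (m i)) => [mi0|pi]; first by rewrite mi0; case: ifP.
  move/forallP/(_ i)/implyP: f2; rewrite oi pi => /(_ isT) /and3P [/eqP -> h1 h2].
  by rewrite h1 h2.
move/forallP => h; apply/andP; split.
  by have := h ord0; rewrite /cB eqxx.
apply/and4P; split => //.
- have := h L; rewrite /cB oL ltnn eqxx.
  by case: ifP => // /eqP L0; rewrite L0 in oL.
- apply/forallP => i; apply/implyP => /andP [oi pi].
  have := h i; rewrite /cB oi.
  case: ifP => [/eqP i0|_]; first by rewrite i0 in oi.
  case: ltnP => [hiL _|hLi]; first exact: ltnW.
  case: ifP => [/eqP -> //|_].
  by move/eqP => m0; rewrite m0 in pi.
- apply/forallP => i; apply/implyP => /andP [oi pi].
  have := h i; rewrite /cB (negbTE oi).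
  case: ifP => [/eqP i0|_]; first by move/eqP => m0; rewrite m0 in pi.
  case: ifP => [/andP [h1 h2] hm|_]; last by move/eqP => m0; rewrite m0 in pi.
  rewrite andbT; apply/eqP; lia.
Qed.

Definition wB (k L i j : nat) : int :=
  (cB k L i j)%:R * (if odd i then 1 else (-1) ^+ j).

Definition BP (k n L : nat) : PI :=
  \prod_(i < n.+1) \sum_(j < n.+1) (wB k L i j *: 'X^(i * j)).

Lemma bool_and_mul (a b : bool) : ((a && b)%:R : int) = a%:R * b%:R.
Proof. by case: a; case: b; rewrite ?mul0r ?mul1r. Qed.

Lemma B_pointwise k n (m : ptn n) (L : 'I_n.+1) : odd L ->
  ((is_ptn m && Bcore k m L)%:R * (-1) ^+ (odd (SB m)) : int)
  = (((\sum_(i < n.+1) i * m i)%N == n)%:R * \prod_(i < n.+1) wB k L i (m i)).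
Proof.
move=> oL.
rewrite /wB big_split /= prod_bool -Bcore_forall //.
have -> : \prod_(i < n.+1) (if odd i then 1 else (-1) ^+ m i) = (-1) ^+ SB m :> int.
  rewrite /SB -prodrXr [RHS]big_mkcond; apply: eq_bigr => i _.
  by case: (odd i).
rewrite signr_odd /is_ptn -andbA !bool_and_mul; ring.
Qed.

Lemma Bdiff_sum k n :
  (B k false n)%:Z - (B k true n)%:Z
  = \sum_(L : 'I_n.+1) (if odd L then (BP k n L)`_n else 0).
Proof.
rewrite /B !card_sumZ -sumrB.
transitivity (\sum_(m : ptn n) \sum_(L : 'I_n.+1)
                 ((is_ptn m && Bcore k m L)%:R * (-1) ^+ (odd (SB m)) : int)).
  apply: eq_bigr => m _; rewrite !Bpred_split -mulr_suml.
  under eq_bigr => L _ do rewrite bool_and_mul.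
  rewrite -mulr_sumr -exists_unique_sum; last exact: Bcore_uniq.
  rewrite -bool_and_mul.
  case: (is_ptn m && _); case: (odd (SB m)); rewrite /= ?expr0 ?expr1; ring.
rewrite exchange_big /=; apply: eq_bigr => L _.
case: ifP => oL; last first.
  by rewrite big1 // => m _; rewrite /Bcore oL andbF mul0r.
rewrite /BP -(count_gen n.+1 n.+1 n (wB k L)).
by apply: eq_bigr => m _; apply: B_pointwise.
Qed.

Lemma sum_only0 n (F : 'I_n.+1 -> PI) : (forall j : 'I_n.+1, (0 < j)%N -> F j = 0) ->
  \sum_(j < n.+1) F j = F ord0.
Proof.
by move=> h; rewrite big_ord_recl big1 ?addr0 // => j _; apply: h.
Qed.

Lemma sum_only01 n (F : 'I_n.+2 -> PI) : (forall j : 'I_n.+2, (1 < j)%N -> F j = 0) ->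
  \sum_(j < n.+2) F j = F ord0 + F (lift ord0 ord0).
Proof.
move=> h; rewrite big_ord_recl big_ord_recl big1 ?addr0 ?addrA // => j _.
by apply: h.
Qed.

Lemma G_minus1 n i : G n i - 1 = \sum_(j < n.+1) (((0 < j)%N)%:R *: 'X^(i * j)).
Proof.
rewrite /G !big_ord_recl /= muln0 expr0 scale0r add0r addrAC subrr add0r.
by apply: eq_bigr => j _; rewrite scale1r.
Qed.

Definition vB (k n L i : nat) : PI :=
  if i == 0%N then 1 else if odd i then
    (if (i < L)%N then G n i else if i == L then G n L - 1 else 1)
  else (if (L + 3 <= i)%N && (i <= L + 2 * k - 1)%N then 1 - 'X^i else 1).

Lemma fB_val k n L (i : nat) : (i <= n)%N ->
  \sum_(j < n.+1) (wB k L i j *: 'X^(i * j)) = vB k n L i.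
Proof.
move=> hi; rewrite /wB /cB /vB.
case: ifP => [/eqP ->|i0].
  rewrite sum_only0.
    by rewrite /= ?mul0n ?expr0 ?mulr1n ?mulr1 ?scale1r.
  by move=> j hj; rewrite eqn0Ngt hj mul0r scale0r.
case: ifP => oi.
  case: ifP => [hL|hL].
    by rewrite /G; apply: eq_bigr => j _; rewrite ?oi /= ?mulr1n ?mulr1 ?scale1r.
  case: ifP => [/eqP iL|iL].
    by rewrite -iL G_minus1; apply: eq_bigr => j _; rewrite ?oi /= ?mulr1.
  rewrite sum_only0.
    by rewrite ?oi /= ?muln0 ?expr0 ?mulr1n ?mulr1 ?scale1r.
  by move=> j hj; rewrite eqn0Ngt hj mul0r scale0r.
case: ifP => hr.
  case: n hi => [|n] hi; first by move/andP: hr => [h1 _]; lia.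
  rewrite sum_only01.
  - by rewrite ?oi /= expr0 expr1 mulr1 muln0 muln1 expr0 scale1r mul1r scaleN1r.
  - by move=> j hj; rewrite leqNgt hj mul0r scale0r.
rewrite sum_only0.
  by rewrite ?oi /= ?muln0 ?expr0 ?mulr1n ?mulr1 ?scale1r.
by move=> j hj; rewrite eqn0Ngt hj mul0r scale0r.
Qed.

Definition uB (k n L i : nat) : PI :=
  (if odd i && (i <= L)%N then G n i else 1) *
  (if ~~ odd i && (L + 3 <= i)%N && (i <= L + 2 * k - 1)%N then 1 - 'X^i else 1).

Lemma GX_cg N i : (0 < i)%N -> cg N (G N i - 1) ('X^i * G N i).
Proof.
move=> hi; have h := @G_inv N i hi.
case: h => r hr; exists r.
have -> : G N i - 1 = ((1 - 'X^i) * G N i - 1) + 'X^i * G N i by ring.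
by rewrite hr; ring.
Qed.

Lemma vB_cg k n L i : odd L ->
  cg n (vB k n L i) ((if (L <= i < L.+1)%N then 'X^L else 1) * uB k n L i).
Proof.
move=> oL; rewrite /vB /uB.
have hL : (0 < L)%N by case: L oL.
case: ifP => [/eqP ->|i0].
  have -> : (L <= 0 < L.+1)%N = false by lia.
  by rewrite /= addn3 !mul1r; apply: cg_refl.
case: ifP => oi.
  case: ifP => [hiL|hiL].
    have -> : (L <= i < L.+1)%N = false by lia.
    by rewrite ltnW //= !mulr1 mul1r; apply: cg_refl.
  case: ifP => [/eqP iL|iL].
    rewrite iL leqnn ltnSn /= mulr1; exact: GX_cg.
  have -> : (L <= i < L.+1)%N = false by apply/negP => /andP [? ?]; move/negP: iL; apply; apply/eqP; lia.
  have -> : (i <= L)%N = false by lia.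
  by rewrite /= !mul1r; apply: cg_refl.
have -> : (L <= i < L.+1)%N = false.
  apply/negP => /andP [? ?]; have e : i = L by lia.
  by rewrite e oL in oi.
by rewrite /= !mul1r; apply: cg_refl.
Qed.

Lemma BP_cg k n l : ((2 * l).+1 <= n)%N ->
  cg n (BP k n (2 * l).+1)
     ('X^((2 * l).+1) * (\prod_(j < l.+1) G n (2 * j).+1
                        * \prod_(l.+2 <= j < l.+1 + k) (1 - 'X^(2 * j)))).
Proof.
move=> hL.
set L := (2 * l).+1.
have oL : odd L by rewrite /L /= mul2n odd_double.
have e1 : \prod_(i < n.+1) vB k n L i = BP k n L.
  by rewrite /BP; apply: eq_bigr => i _; rewrite fB_val // -ltnS.
rewrite -e1.
apply: (@cg_trans n _ (\prod_(i < n.+1)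
   ((if (L <= i < L.+1)%N then 'X^L else 1) * uB k n L i))).
  by apply: cg_prod => i _; apply: vB_cg.
rewrite big_split /= (prod_if_range _ _ _ (fun _ => 'X^L)) // big_nat1.
apply: cg_mull.
rewrite /uB big_split /= /L OD; last lia.
apply: cg_mull.
have -> : ((2 * l).+1 + 3 = 2 * l.+2)%N by lia.
have -> : ((2 * l).+1 + 2 * k - 1 = 2 * (l.+1 + k) - 2)%N by lia.
by apply: EV.
Qed.

Lemma GP_pair n b : GP n (2 * b) = \prod_(j < b) (G n (2 * j).+1 * G n (2 * j).+2).
Proof.
rewrite /GP big_add1 /= big_mkord.
exact: (prod_pair (fun i => G n i.+1)).
Qed.

Lemma Q2_ord m : Q2 m = \prod_(j < m) (1 - 'X^(2 * j.+1)).
Proof. by rewrite /Q2 big_add1 /= big_mkord. Qed.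

Lemma Q2_split a b : (a <= b)%N ->
  Q2 b = Q2 a * \prod_(a.+1 <= j < b.+1) (1 - 'X^(2 * j)).
Proof. by move=> h; rewrite /Q2 (@big_cat_nat _ _ _ a.+1). Qed.

Lemma Balg n k l : (0 < k)%N ->
  cg n (\prod_(j < l.+1) G n (2 * j).+1 * \prod_(l.+2 <= j < l.+1 + k) (1 - 'X^(2 * j)))
       (Q2 (l.+1 + k - 1) * GP n (2 * l.+1)).
Proof.
move=> hk.
have -> : (l.+1 + k - 1 = l + k)%N by lia.
rewrite (@Q2_split l.+1 (l + k)); last lia.
have -> : ((l + k).+1 = l.+1 + k)%N by lia.
rewrite GP_pair Q2_ord.
set E := \prod_(_ <= _ < _) _.
have -> : \prod_(j < l.+1) (1 - 'X^(2 * j.+1)) * E *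
      \prod_(j < l.+1) (G n (2 * j).+1 * G n (2 * j).+2)
    = \prod_(j < l.+1) (G n (2 * j).+1 * ((1 - 'X^((2 * j).+2)) * G n (2 * j).+2)) * E.
  rewrite mulrC mulrA -big_split /=; congr (_ * _); apply: eq_bigr => j _.
  have -> : (2 * j.+1 = (2 * j).+2)%N by lia.
  ring.
apply: cg_mulr; apply: cg_prod => j _.
rewrite -[X in cg _ X _]mulr1; apply: cg_mull; apply: cg_sym; exact: G_inv.
Qed.

Lemma G_lower n i : (0 < i)%N -> cg n (G n.+1 i) (G n i).
Proof.
move=> hi; rewrite /G big_ord_recr /=.
have h : cg n ('X^(i * n.+1)) 0 by apply: cg_Xn0; rewrite mulnC; exact: leq_pmulr.
by case: h => r hr; exists r; rewrite hr; ring.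
Qed.

Lemma GP_lower n b : cg n (GP n.+1 b) (GP n b).
Proof.
rewrite /GP big_nat_cond [X in cg _ _ X]big_nat_cond.
by apply: cg_prod => i /andP [/andP [hi _] _]; apply: G_lower.
Qed.

Lemma B_term k n l : (0 < k)%N -> ((2 * l).+1 <= n)%N ->
  (BP k n (2 * l).+1)`_n = (a n.+1 k l.+1)`_(n.+1).
Proof.
move=> hk hL.
rewrite (@cg_coef _ _ _ (BP_cg k hL)).
rewrite (@cg_coef _ _ _ (@cg_mull _ (GRing.exp (polyX _) (2 * l).+1) _ _ (Balg n l hk))).
rewrite /a.
have -> : 'X^(2 * l.+1) = 'X * 'X^((2 * l).+1) :> PI.
  by rewrite -exprS; congr ('X^_); lia.
rewrite -!mulrA coefXM /=.
apply: cg_coef; apply: cg_mull; apply: cg_sym; apply: cg_mull; exact: GP_lower.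
Qed.

Lemma a_coef_hi N k l : (N < 2 * l)%N -> (a N k l)`_N = 0.
Proof.
move=> h; rewrite /a -mulrA mulrC coefMXn.
by rewrite h.
Qed.

Lemma reindex_odd n (h : nat -> int) :
  (forall l, (n.+1 < 2 * l)%N -> h l = 0) ->
  \sum_(L < n.+1) (if odd L then h (L.+1)./2 else 0) = \sum_(1 <= l < n.+2) h l.
Proof.
move=> h0.
pose F := fun L : nat => if odd L then h (L.+1)./2 else 0.
change (\sum_(L < n.+1) F L = \sum_(1 <= l < n.+2) h l).
rewrite (@big_ord_widen _ _ _ n.+1 (2 * n.+1) F); last lia.
rewrite big_mkcond /=.
have -> : \sum_(i < 2 * n.+1) (if (i < n.+1)%N then F i else 0) = \sum_(i < 2 * n.+1) F i.
  apply: eq_bigr => i _; case: ltnP => // hi; rewrite /F; case: ifP => // oi.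
  symmetry; apply: h0.
  have e := odd_double_half i; rewrite oi -mul2n in e.
  rewrite -[(i.+1)./2]/(uphalf i) uphalf_half oi; lia.
rewrite sum_pair big_add1 /= big_mkord; apply: eq_bigr => j _.
rewrite /F /= mul2n odd_double /= add0r.
by rewrite doubleK.
Qed.

Lemma Bdiff_final k n : (0 < k)%N ->
  (B k false n)%:Z - (B k true n)%:Z = (Csum n.+1 k)`_(n.+1).
Proof.
move=> hk; rewrite Bdiff_sum /Csum coef_sum.
rewrite -(@reindex_odd n (fun l => (a n.+1 k l)`_(n.+1))); last first.
  by move=> l hl; apply: a_coef_hi.
apply: eq_bigr => L _; case: ifP => // oL.
have e := odd_double_half L; rewrite oL -mul2n in e.
rewrite -[(L.+1)./2]/(uphalf L) uphalf_half oL add1n.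
set q := L./2 in e *.
have eL : (L : nat) = (2 * q).+1 by rewrite -e add1n.
rewrite [in LHS]eL; apply: B_term => //.
rewrite -eL; have := ltn_ord L; lia.
Qed.

Definition Ccore (k n l : nat) (m : ptn n) : bool :=
  ([&& 0 < mu m (2 * l),
      [forall i : 'I_n.+1, ((0 < i) && (i <= l)) ==> (m i <= 1)] &
      [forall i : 'I_n.+1, ((2 * l < i) && (0 < m i)) ==>
          [&& ~~ odd i, m i == 1 :> nat, 2 * l + 2 <= i & i <= 2 * l + 2 * k - 2]]])%N.

Definition SC (n l : nat) (m : ptn n) : nat := (\sum_(i < n.+1 | 2 * l < i) m i)%N.

Lemma Cpred_split k b n l (m : ptn n) :
  Cpred k b l m = is_ptn m && Ccore k l m && (odd (SC l m) == b).
Proof. by rewrite /Cpred /Ccore /SC !andbA. Qed.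

Definition cC (k l i j : nat) : bool :=
  (if i == 0 then j == 0 else if i <= l then j <= 1 else if i < 2 * l then true
   else if i == 2 * l then 0 < j
   else if ~~ odd i && (2 * l.+1 <= i) && (i <= 2 * (l + k) - 2) then j <= 1
   else j == 0)%N.

Lemma Ccore_forall k n l (m : ptn n) : (0 < l)%N -> (2 * l <= n)%N ->
  ((m ord0 == 0 :> nat) && Ccore k l m) = [forall i : 'I_n.+1, cC k l i (m i)].
Proof.
move=> l0 hl.
have hmu : mu m (2 * l) = m (inord (2 * l)) by rewrite /mu hl.
have vi : (inord (2 * l) : 'I_n.+1) = 2 * l :> nat by rewrite inordK // ltnS.
apply/idP/idP.
  move=> /andP [/eqP m0 /and3P [pm f1 f2]]; apply/forallP => i; rewrite /cC.
  case: ifP => [/eqP i0|i0].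
    have -> : i = ord0 by apply: val_inj.
    by rewrite m0.
  case: ifP => il.
    by move/forallP/(_ i)/implyP: f1; apply; rewrite il andbT lt0n i0.
  case: ifP => // i2.
  case: ifP => [/eqP e2|e2].
    have -> : i = inord (2 * l) by apply: val_inj; rewrite /= vi e2.
    by rewrite -hmu.
  case: (posnP (m i)) => [mi0|pi]; first by rewrite mi0; case: ifP.
  have gi : (2 * l < i)%N by move/negbT: i2; move/negbT: e2; lia.
  move/forallP/(_ i)/implyP: f2; rewrite gi pi => /(_ isT) /and4P [oi /eqP mi1 h1 h2].
  have -> : (2 * l.+1 <= i)%N by lia.
  have -> : (i <= 2 * (l + k) - 2)%N by lia.
  by rewrite oi mi1.
move/forallP => h; apply/andP; split.
  by have := h ord0; rewrite /cC eqxx.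
apply/and3P; split.
- rewrite hmu; have := h (inord (2 * l)); rewrite /cC vi.
  have -> : (2 * l == 0)%N = false by lia.
  have -> : (2 * l <= l)%N = false by lia.
  by rewrite ltnn eqxx.
- apply/forallP => i; apply/implyP => /andP [pi il].
  have := h i; rewrite /cC il.
  by case: ifP => [/eqP i0|_] //; rewrite i0 in pi.
- apply/forallP => i; apply/implyP => /andP [gi pi].
  have := h i; rewrite /cC.
  have -> : (i == 0 :> nat) = false by lia.
  have -> : (i <= l)%N = false by lia.
  have -> : (i < 2 * l)%N = false by lia.
  have -> : (i == 2 * l :> nat) = false by lia.
  case: ifP => [/andP [/andP [oi h1] h2] hm|_]; last by move/eqP => m0; rewrite m0 in pi.
  rewrite oi /=; apply/and3P; split; [apply/eqP | |]; lia.
Qed.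

Definition wC (k l i j : nat) : int :=
  (cC k l i j)%:R * (if (2 * l < i)%N then (-1) ^+ j else 1).

Definition CP (k n l : nat) : PI :=
  \prod_(i < n.+1) \sum_(j < n.+1) (wC k l i j *: 'X^(i * j)).

Lemma C_pointwise k n l (m : ptn n) : (0 < l)%N -> (2 * l <= n)%N ->
  ((is_ptn m && Ccore k l m)%:R * (-1) ^+ (odd (SC l m)) : int)
  = (((\sum_(i < n.+1) i * m i)%N == n)%:R * \prod_(i < n.+1) wC k l i (m i)).
Proof.
move=> l0 hl.
rewrite /wC big_split /= prod_bool -Ccore_forall //.
have -> : \prod_(i < n.+1) (if (2 * l < i)%N then (-1) ^+ m i else 1) = (-1) ^+ SC l m :> int.
  rewrite /SC -prodrXr [RHS]big_mkcond; apply: eq_bigr => i _.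
  by case: ifP.
rewrite signr_odd /is_ptn -andbA !bool_and_mul; ring.
Qed.

Lemma Cdiff_l k n l : (0 < l)%N ->
  (#|[set m : ptn n | Cpred k false l m]|)%:Z - (#|[set m : ptn n | Cpred k true l m]|)%:Z
  = (if (2 * l <= n)%N then (CP k n l)`_n else 0).
Proof.
move=> l0; rewrite !card_sumZ -sumrB.
transitivity (\sum_(m : ptn n) ((is_ptn m && Ccore k l m)%:R * (-1) ^+ (odd (SC l m)) : int)).
  apply: eq_bigr => m _; rewrite !Cpred_split.
  case: (is_ptn m && _); case: (odd (SC l m)); rewrite /= ?expr0 ?expr1; ring.
case: ifP => hl; last first.
  apply: big1 => m _; rewrite /Ccore /mu.
  by rewrite (_ : (2 * l <= n)%N = false) // andbF mul0r.
rewrite /CP -(count_gen n.+1 n.+1 n (wC k l)).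
by apply: eq_bigr => m _; apply: C_pointwise.
Qed.

Definition vC (k n l i : nat) : PI :=
  if i == 0%N then 1 else if (i <= l)%N then 1 + 'X^i
  else if (i < 2 * l)%N then G n i else if i == (2 * l)%N then G n (2 * l) - 1
  else if ~~ odd i && (2 * l.+1 <= i)%N && (i <= 2 * (l + k) - 2)%N then 1 - 'X^i
  else 1.

Lemma fC_val k n l (i : nat) : (i <= n)%N ->
  \sum_(j < n.+1) (wC k l i j *: 'X^(i * j)) = vC k n l i.
Proof.
move=> hi; rewrite /wC /cC /vC.
case: ifP => [/eqP ->|i0].
  rewrite sum_only0; first by rewrite /= ?mul0n ?expr0 ?mulr1n ?mulr1 ?scale1r.
  by move=> j hj; rewrite eqn0Ngt hj mul0r scale0r.
case: ifP => il.
  case: n hi => [|n] hi; first lia.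
  have -> : (2 * l < i)%N = false by lia.
  rewrite sum_only01.
    by rewrite /= ?muln0 ?muln1 ?expr0 ?mulr1n ?mulr1 ?scale1r.
  by move=> j hj; rewrite leqNgt hj mul0r scale0r.
case: ifP => i2.
  have -> : (2 * l < i)%N = false by lia.
  by rewrite /G; apply: eq_bigr => j _; rewrite /= ?mulr1n ?mulr1 ?scale1r.
case: ifP => [/eqP e2|e2].
  have -> : (2 * l < i)%N = false by lia.
  by rewrite -e2 G_minus1; apply: eq_bigr => j _; rewrite /= ?mulr1.
have -> : (2 * l < i)%N = true by move/negbT: i2; move/negbT: e2; lia.
case: ifP => hr.
  case: n hi => [|n] hi; first by move/andP: hr => [/andP [_ h1] _]; lia.
  rewrite sum_only01.
    by rewrite /= expr0 expr1 mulr1 muln0 muln1 expr0 scale1r mul1r scaleN1r.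
  by move=> j hj; rewrite leqNgt hj mul0r scale0r.
rewrite sum_only0.
  by rewrite /= ?muln0 ?expr0 ?mulr1n ?mulr1 ?scale1r.
by move=> j hj; rewrite eqn0Ngt hj mul0r scale0r.
Qed.

Definition uC (k n l i : nat) : PI :=
  (if (1 <= i < l.+1)%N then 1 + 'X^i else 1) *
  (if (l.+1 <= i < (2 * l).+1)%N then G n i else 1) *
  (if ~~ odd i && (2 * l.+1 <= i)%N && (i <= 2 * (l + k) - 2)%N then 1 - 'X^i else 1).

Lemma vC_cg k n l i : (0 < l)%N ->
  cg n (vC k n l i) ((if (2 * l <= i < (2 * l).+1)%N then 'X^(2 * l) else 1) * uC k n l i).
Proof.
move=> l0; rewrite /vC /uC.
case: ifP => [/eqP ->|i0].
  try (have -> : (2 * l <= 0 < (2 * l).+1)%N = false by lia).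
  try (have -> : (1 <= 0 < l.+1)%N = false by lia).
  try (have -> : (l.+1 <= 0 < (2 * l).+1)%N = false by lia).
  try (have -> : (2 * l.+1 <= 0)%N = false by lia).
  by rewrite /= ?andbF ?mul1r ?mulr1; apply: cg_refl.
case: ifP => il.
  try (have -> : (2 * l <= i < (2 * l).+1)%N = false by lia).
  try (have -> : (1 <= i < l.+1)%N = true by lia).
  try (have -> : (l.+1 <= i < (2 * l).+1)%N = false by lia).
  try (have -> : (2 * l.+1 <= i)%N = false by lia).
  by rewrite /= ?andbF ?mul1r ?mulr1; apply: cg_refl.
case: ifP => i2.
  try (have -> : (2 * l <= i < (2 * l).+1)%N = false by lia).
  try (have -> : (1 <= i < l.+1)%N = false by lia).
  try (have -> : (l.+1 <= i < (2 * l).+1)%N = true by lia).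
  try (have -> : (2 * l.+1 <= i)%N = false by lia).
  by rewrite /= ?andbF ?mul1r ?mulr1; apply: cg_refl.
case: ifP => [/eqP e2|e2].
  rewrite e2.
  try (have -> : (2 * l <= 2 * l < (2 * l).+1)%N = true by lia).
  try (have -> : (1 <= 2 * l < l.+1)%N = false by lia).
  try (have -> : (l.+1 <= 2 * l < (2 * l).+1)%N = true by lia).
  try (have -> : (2 * l.+1 <= 2 * l)%N = false by lia).
  rewrite /= ?andbF ?mulr1 ?mul1r; apply: GX_cg; lia.
try (have -> : (2 * l <= i < (2 * l).+1)%N = false by move/negbT: e2; lia).
try (have -> : (1 <= i < l.+1)%N = false by lia).
try (have -> : (l.+1 <= i < (2 * l).+1)%N = false by move/negbT: e2; move/negbT: i2; lia).
by rewrite /= ?andbF ?mul1r ?mulr1; apply: cg_refl.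
Qed.

Lemma CP_cg k n l : (0 < l)%N -> (2 * l <= n)%N ->
  cg n (CP k n l)
     ('X^(2 * l) * (\prod_(1 <= i < l.+1) (1 + 'X^i) * \prod_(l.+1 <= i < (2 * l).+1) G n i
                    * \prod_(l.+1 <= j < l + k) (1 - 'X^(2 * j)))).
Proof.
move=> l0 hl.
have e1 : \prod_(i < n.+1) vC k n l i = CP k n l.
  by rewrite /CP; apply: eq_bigr => i _; rewrite fC_val // -ltnS.
rewrite -e1.
apply: (@cg_trans n _ (\prod_(i < n.+1)
   ((if (2 * l <= i < (2 * l).+1)%N then 'X^(2 * l) else 1) * uC k n l i))).
  by apply: cg_prod => i _; apply: vC_cg.
rewrite big_split /= (prod_if_range _ _ _ (fun _ => 'X^(2 * l))) // big_nat1.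
apply: cg_mull.
rewrite /uC !big_split /=.
rewrite (prod_if_range _ _ _ (fun i => 1 + 'X^i)); last lia.
rewrite (prod_if_range _ _ _ (fun i => G n i)); last lia.
apply: cg_mull; exact: EV.
Qed.

Lemma Calg n k l : (0 < k)%N ->
  cg n (\prod_(1 <= i < l.+1) (1 + 'X^i) * \prod_(l.+1 <= i < (2 * l).+1) G n i
                    * \prod_(l.+1 <= j < l + k) (1 - 'X^(2 * j)))
       (Q2 (l + k - 1) * GP n (2 * l)).
Proof.
move=> hk.
rewrite (@Q2_split l (l + k - 1)); last lia.
have -> : ((l + k - 1).+1 = l + k)%N by lia.
rewrite /GP (@big_cat_nat _ _ _ l.+1 1 (2 * l).+1) /=; try lia.
have eQ : Q2 l = \prod_(1 <= i < l.+1) ((1 - 'X^i) * (1 + 'X^i)).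
  rewrite /Q2; apply: eq_bigr => i _; rewrite mulnC exprM; ring.
rewrite eQ.
set E := \prod_(l.+1 <= j < l + k) _.
set H := \prod_(l.+1 <= i < (2 * l).+1) _.
have -> : \prod_(1 <= i < l.+1) ((1 - 'X^i) * (1 + 'X^i)) * E *
    (\prod_(1 <= i < l.+1) G n i * H)
   = \prod_(1 <= i < l.+1) ((1 + 'X^i) * ((1 - 'X^i) * G n i)) * H * E.
  rewrite !big_split /=; ring.
apply: cg_mulr; apply: cg_mulr.
rewrite big_nat_cond [X in cg _ _ X]big_nat_cond.
apply: cg_prod => i /andP [/andP [hi _] _].
rewrite -[X in cg _ X _]mulr1; apply: cg_mull; apply: cg_sym; exact: G_inv.
Qed.

Lemma C_term k n l : (0 < k)%N -> (0 < l)%N -> (2 * l <= n)%N ->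
  (CP k n l)`_n = (a n k l)`_n.
Proof.
move=> hk l0 hl.
rewrite (@cg_coef _ _ _ (CP_cg k l0 hl)).
rewrite (@cg_coef _ _ _ (@cg_mull _ ('X^(2 * l)) _ _ (Calg n l hk))).
by rewrite /a mulrA.
Qed.

Lemma Cdiff_final k n : (0 < k)%N ->
  (C k false n)%:Z - (C k true n)%:Z = (Csum n k)`_n.
Proof.
move=> hk; rewrite /C /Csum coef_sum -!natz !natr_sum -sumrB.
apply: eq_big_nat => l /andP [l0 _].
rewrite !natz Cdiff_l //; case: ifP => hl; first exact: C_term.
by rewrite a_coef_hi //; lia.
Qed.

Definition Dcore (n j : nat) (m : dptn n j) (s : 'I_n.+1) : bool :=
  ((m s == j :> nat) &&
    [forall i : 'I_n.+1, ((i < s) ==> (m i == 0 :> nat)) && ((s < i) ==> (m i <= 1))])%N.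

Definition cD (j s i jj : nat) : bool :=
  (if i < s then jj == 0 else if i == s then jj == j else jj <= 1)%N.

Lemma Dcore_uniq n j (m : dptn n j) s s' : (0 < j)%N ->
  Dcore m s -> Dcore m s' -> s = s'.
Proof.
move=> j0 /andP [/eqP ms /forallP h] /andP [/eqP ms' /forallP h'].
apply: val_inj; apply/eqP; case: (ltngtP s s') => // hss.
  have := h' s; rewrite hss /= => /andP [/eqP m0 _]; lia.
have := h s'; rewrite hss /= => /andP [/eqP m0 _]; lia.
Qed.

Lemma Dcore_forall n j (m : dptn n j) s :
  Dcore m s = [forall i : 'I_n.+1, cD j s i (m i)].
Proof.
apply/idP/idP.
  move=> /andP [/eqP ms /forallP h]; apply/forallP => i; rewrite /cD.
  case: ltngtP => hi.
  - by have /andP [/implyP H _] := h i; apply: H.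
  - by have /andP [_ /implyP H] := h i; apply: H.
  - have -> : i = s by apply: val_inj.
    by apply/eqP.
move/forallP => h; apply/andP; split.
  by have := h s; rewrite /cD ltnn eqxx.
apply/forallP => i; have := h i; rewrite /cD.
case: ltngtP => hi /= H //; try lia.
Qed.

Definition DP (j n s : nat) : PI :=
  \prod_(i < n.+1) \sum_(jj < (n + j).+1) ((cD j s i jj)%:R *: 'X^(i * jj)).

Lemma Dcount_s n j (s : 'I_n.+1) :
  \sum_(m : dptn n j) ((((\sum_(i < n.+1) i * m i)%N == n) && Dcore m s)%:R : int)
  = (DP j n s)`_n.
Proof.
rewrite /DP -(count_gen n.+1 (n + j).+1 n (fun i jj => (cD j s i jj)%:R)).
apply: eq_bigr => m _; rewrite prod_bool -Dcore_forall.
by rewrite bool_and_mul.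
Qed.

Lemma sum_pick M c (F : nat -> PI) : (c < M)%N ->
  \sum_(jj < M) (((jj == c :> nat))%:R *: F jj) = F c.
Proof.
move=> hc; rewrite (bigD1 (Ordinal hc)) //= eqxx scale1r big1 ?addr0 //.
move=> jj hjj; case: eqP => e; last by rewrite scale0r.
exfalso; move/negP: hjj; apply; apply/eqP; apply: val_inj; exact: e.
Qed.

Lemma DP_val n j s : (0 < j)%N -> (s <= n)%N ->
  DP j n s = 'X^(j * s) * A n s.
Proof.
move=> j0 hs; rewrite /DP.
have e : forall i : 'I_n.+1,
    \sum_(jj < (n + j).+1) (((cD j s i jj)%:R : int) *: ('X^(i * jj) : PI))
    = ((if (s <= i < s.+1)%N then 'X^(j * s) else 1)
      * (if (s.+1 <= i < n.+1)%N then 1 + 'X^i else 1) : PI).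
  move=> i; rewrite /cD.
  case: ltngtP => hi.
  - try (have -> : (s <= i < s.+1)%N = false by lia).
    try (have -> : (s.+1 <= i < n.+1)%N = false by lia).
    rewrite mulr1.
    rewrite (sum_pick (fun jj => 'X^(i * jj))) ?muln0 ?expr0 //.
  - try (have -> : (s <= i < s.+1)%N = false by lia).
    try (have -> : (s.+1 <= i < n.+1)%N = true by have := ltn_ord i; lia).
    rewrite /= ?ltn_ord.
    try (have -> : (i < s.+1)%N = false by lia).
    have -> : (n + j).+1 = (n + j.-1).+2 by lia.
    rewrite /= mul1r big_ord_recl big_ord_recl big1 ?addr0.
      by rewrite /= muln0 muln1 expr0 !scale1r ?addrA.
    by move=> jj _; rewrite /= scale0r.
  - try (have -> : (s <= i < s.+1)%N = true by lia).
    try (have -> : (s.+1 <= i < n.+1)%N = false by lia).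
    rewrite mulr1 (sum_pick (fun jj => 'X^(i * jj))); last lia.
    by rewrite /= hi ltnSn mulnC.
rewrite (eq_bigr _ (fun i _ => e i)) big_split /=.
rewrite (prod_if_range _ _ _ (fun _ => 'X^(j * s))) // big_nat1.
by rewrite (prod_if_range _ _ _ (fun i => 1 + 'X^i)).
Qed.

Lemma Dpred_split n j (m : dptn n j) :
  Dpred m = (((\sum_(i < n.+1) i * m i)%N == n) && [exists s, Dcore m s]).
Proof. by []. Qed.

Lemma and_exists_sum (T : finType) (A : bool) (P : pred T) :
  (forall x y, P x -> P y -> x = y) ->
  ((A && [exists x, P x])%:R : int) = \sum_x ((A && P x)%:R : int).
Proof.
move=> hu; case: A => /=; first exact: exists_unique_sum.
by rewrite big1.
Qed.

Lemma Dcount n j : (0 < j)%N -> (D j n)%:Z = (Dsum n j)`_n.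
Proof.
move=> j0; rewrite /D card_sumZ /Dsum coef_sum.
transitivity (\sum_(m : dptn n j) \sum_(s : 'I_n.+1)
   ((((\sum_(i < n.+1) i * m i)%N == n) && Dcore m s)%:R : int)).
  apply: eq_bigr => m _; rewrite Dpred_split; apply: and_exists_sum.
  by move=> x y; apply: Dcore_uniq.
rewrite exchange_big /=; apply: eq_bigr => s _.
by rewrite Dcount_s DP_val // -ltnS.
Qed.

Unset Implicit Arguments.

Theorem theorem3 (k n : nat) :
  (1 <= k)%N -> (2 ^ (k - 1) * k * (2 * k - 1) <= n)%N ->
  (B k false n)%:Z - (B k true n)%:Z
    = (C k false n.+1)%:Z - (C k true n.+1)%:Z /\
  2 * ((C k false n.+1)%:Z - (C k true n.+1)%:Z) = (D (2 * k) n.+1)%:Z.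
Proof.
move=> hk hn.
rewrite Bdiff_final // Cdiff_final //; split => //.
rewrite Dcount; last lia.
have hmain := main_cg n.+1 k.-1.
have ek : k.-1.+1 = k by lia.
rewrite ek in hmain.
have -> : (2 * k = (2 * k.-1).+2)%N by lia.
rewrite (@cg_coef _ _ _ hmain) coefD Ef_coef ?addr0.
  by rewrite -polyC_natr coefCM.
have h2 : (1 <= 2 ^ (k - 1))%N by rewrite expn_gt0.
have : (k * (2 * k - 1) <= n)%N.
  apply: leq_trans hn; rewrite -mulnA; exact: leq_pmull.
rewrite ek; lia.
Qed.
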